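(* Let $f:\mathbb{R}^n\to\mathbb{R}\cup\{\infty\}$ be a proper lower semicontinuous function with $\bar x\in\operatorname{dom} f$. Consider the assertions: (i) $\bar x$ is a strong local minimizer of $f$; (ii) $\bar x$ is a local minimizer of $f$ and $\partial f$ is strongly metrically subregular at $\bar x$ for $0$; (iii) $0\in\partial_p f(\bar x)$ and $\langle z,w\rangle>0$ for all $w\in\operatorname{dom}D(\partial f)(\bar x|0)\setminus\{0\}$ and all $z\in D(\partial f)(\bar x|0)(w)$. Then (iii) $\Rightarrow$ (ii) $\Rightarrow$ (i).
   Context: Tangent cone: $T_\Omega(\bar u)=\{v\mid \exists t_k\downarrow0,\ v_k\to v,\ \bar u+t_kv_k\in\Omega\}$. Limiting subdifferential $\partial f(\bar x)=\{v\mid (v,-1)\in N_{\operatorname{epi} f}(\bar x,f(\bar x))\}$ where $N$ is the limiting (Mordukhovich) normal cone; proximal subdifferential $\partial_p f(\bar x)=\{v\mid \liminf_{x\to\bar x}\frac{f(x)-f(\bar x)-\langle v,x-\bar x\rangle}{\|x-\bar x\|^2}>-\infty\}$. Graphical derivative: $DF(\bar x|\bar y)(w)=\{z\mid (w,z)\in T_{\operatorname{gph}F}(\bar x,\bar y)\}$, applied to $F=\partial f$; $\operatorname{dom}$ denotes the set where the map is nonempty. A set-valued map $F$ is metrically subregular at $\bar x$ for $\bar y\in F(\bar x)$ if there are $\kappa>0$ and a neighborhood $U$ of $\bar x$ with $d(x;F^{-1}(\bar y))\le\kappa\, d(\bar y;F(x))$ for all $x\in U$; it is strongly metrically subregular if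 in addition $\bar x$ is an isolated point of $F^{-1}(\bar y)$. $\bar x$ is a strong local minimizer of $f$ if there are $\kappa,\gamma>0$ with $f(x)-f(\bar x)\ge\frac\kappa2\|x-\bar x\|^2$ whenever $\|x-\bar x\|\le\gamma$. *)

(* Defs.v *)
From Stdlib Require Import Fin Reals Lra Classical ClassicalEpsilon FunctionalExtensionality.
Open Scope R_scope.

Definition vec (n : nat) := Fin.t n -> R.
Definition vzero {n} : vec n := fun _ => 0.
Definition vadd {n} (x y : vec n) : vec n := fun i => x i + y i.
Definition vsub {n} (x y : vec n) : vec n := fun i => x i - y i.
Definition vscale {n} (t : R) (x : vec n) : vec n := fun i => t * x i.

Fixpoint fsum (n : nat) : (Fin.t n -> R) -> R :=
  match n return (Fin.t n -> R) -> R with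
  | O => fun _ => 0
  | S m => fun g => g Fin.F1 + fsum m (fun i => g (Fin.FS i))
  end.

Definition inner {n} (x y : vec n) : R := fsum n (fun i => x i * y i).
Definition norm {n} (x : vec n) : R := sqrt (inner x x).

(** * Extended reals R ∪ {+∞}: None = +∞ *)
Definition ereal := option R.
Definition ele (a b : ereal) : Prop :=
  match a, b with
  | _, None => True
  | None, Some _ => False
  | Some x, Some y => x <= y
  end.
Definition rlt_e (r : R) (v : ereal) : Prop :=
  match v with None => True | Some a => r < a end.
Definition escale (k : R) (a : ereal) : ereal := option_map (Rmult k) a.

Definition dom {n} (f : vec n -> ereal) (x : vec n) : Prop := f x <> None.
Definition proper {n} (f : vec n -> ereal) : Prop := exists x, dom f x.
Definition lsc {n} (f : vec n -> ereal) : Prop :=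
  forall x r, rlt_e r (f x) ->
    exists d, 0 < d /\ forall y, norm (vsub y x) < d -> rlt_e r (f y).

(** Distance from a point to a set, +∞ for the empty set. *)
Definition dist_set {n} (x : vec n) (A : vec n -> Prop) : ereal.
Proof.
  destruct (excluded_middle_informative (exists a, A a)) as [H|H].
  - refine (Some (- proj1_sig (completeness
        (fun r => exists a, A a /\ r = - norm (vsub x a)) _ _))).
    + exists 0. intros r [a [_ ->]].
      pose proof (sqrt_pos (inner (vsub x a) (vsub x a))). unfold norm. lra.
    + destruct H as [a Ha]. exists (- norm (vsub x a)). eauto.
  - exact None.
Defined.

Definition pt (n : nat) := (vec n * R)%type.
Definition psub {n} (u v : pt n) : pt n := (vsub (fst u) (fst v), snd u - snd v).
Definition pinner {n} (u v : pt n) : R := inner (fst u) (fst v) + snd u * snd v.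
Definition pnorm {n} (u : pt n) : R := sqrt (pinner u u).

Definition epi {n} (f : vec n -> ereal) (u : pt n) : Prop :=
  match f (fst u) with Some b => b <= snd u | None => False end.

Definition reg_normal {n} (C : pt n -> Prop) (u v : pt n) : Prop :=
  C u /\ forall eps, 0 < eps -> exists d, 0 < d /\
    forall u', C u' -> pnorm (psub u' u) < d ->
      pinner v (psub u' u) <= eps * pnorm (psub u' u).

Definition lim_normal {n} (C : pt n -> Prop) (u v : pt n) : Prop :=
  C u /\ exists (uk vk : nat -> pt n),
    (forall k, C (uk k)) /\
    Un_cv (fun k => pnorm (psub (uk k) u)) 0 /\
    Un_cv (fun k => pnorm (psub (vk k) v)) 0 /\
    (forall k, reg_normal C (uk k) (vk k)).

Definition subdiff {n} (f : vec n -> ereal) (x v : vec n) : Prop :=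
  match f x with
  | Some a => lim_normal (epi f) (x, a) (v, -1)
  | None => False
  end.

Definition prox_subdiff {n} (f : vec n -> ereal) (xb v : vec n) : Prop :=
  match f xb with
  | Some fb => exists M d, 0 < d /\ forall x, 0 < norm (vsub x xb) < d ->
      match f x with
      | None => True
      | Some fx => M <= (fx - fb - inner v (vsub x xb)) / (norm (vsub x xb))^2
      end
  | None => False
  end.

(** * Set-valued maps F : R^n ⇉ R^n  (F x y  means  y ∈ F(x)) *)
Definition svmap (n : nat) := vec n -> vec n -> Prop.

(** Graphical derivative DF(xb|yb)(w): z such that (w,z) ∈ T_{gph F}(xb,yb) *)
Definition graph_deriv {n} (F : svmap n) (xb yb w z : vec n) : Prop :=
  exists (t : nat -> R) (wk zk : nat -> vec n),
    (forall k, 0 < t k) /\ Un_cv t 0 /\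
    Un_cv (fun k => norm (vsub (wk k) w)) 0 /\
    Un_cv (fun k => norm (vsub (zk k) z)) 0 /\
    (forall k, F (vadd xb (vscale (t k) (wk k))) (vadd yb (vscale (t k) (zk k)))).

Definition graph_deriv_dom {n} (F : svmap n) (xb yb w : vec n) : Prop :=
  exists z, graph_deriv F xb yb w z.

Definition metric_subregular {n} (F : svmap n) (xb yb : vec n) : Prop :=
  F xb yb /\ exists kappa d, 0 < kappa /\ 0 < d /\
    forall x, norm (vsub x xb) < d ->
      ele (dist_set x (fun u => F u yb)) (escale kappa (dist_set yb (F x))).

Definition strong_metric_subregular {n} (F : svmap n) (xb yb : vec n) : Prop :=
  metric_subregular F xb yb /\
  exists e, 0 < e /\ forall x, F x yb -> norm (vsub x xb) < e -> x = xb.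

Definition local_minimizer {n} (f : vec n -> ereal) (xb : vec n) : Prop :=
  exists d, 0 < d /\ forall x, norm (vsub x xb) <= d -> ele (f xb) (f x).

Definition strong_local_minimizer {n} (f : vec n -> ereal) (xb : vec n) : Prop :=
  exists kappa gamma, 0 < kappa /\ 0 < gamma /\
    forall x, norm (vsub x xb) <= gamma ->
      match f x, f xb with
      | None, _ => True
      | Some fx, Some fb => fx - fb >= kappa / 2 * (norm (vsub x xb))^2
      | Some _, None => False
      end.

(* Main.v *)
Require Import Defs.
From Stdlib Require Import Reals Lra Lia Psatz Classical ClassicalEpsilon FunctionalExtensionality.
Open Scope R_scope.

Lemma fsum_ext n (g h : Fin.t n -> R) : (forall i, g i = h i) -> fsum n g = fsum n h.
Proof.
  revert g h; induction n; intros g h H; simpl; auto.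
  rewrite H, (IHn (fun i => g (Fin.FS i)) (fun i => h (Fin.FS i))); auto.
Qed.

Lemma fsum_add n (g h : Fin.t n -> R) : fsum n (fun i => g i + h i) = fsum n g + fsum n h.
Proof.
  revert g h; induction n; intros g h; simpl. ring.
  rewrite (IHn (fun i => g (Fin.FS i)) (fun i => h (Fin.FS i))); ring.
Qed.

Lemma fsum_scal n c (g : Fin.t n -> R) : fsum n (fun i => c * g i) = c * fsum n g.
Proof.
  revert g; induction n; intros g; simpl. ring.
  rewrite (IHn (fun i => g (Fin.FS i))); ring.
Qed.

Lemma fsum_0 n : fsum n (fun _ => 0) = 0.
Proof. induction n; simpl; auto. rewrite IHn; ring. Qed.

Lemma fsum_nonneg n (g : Fin.t n -> R) : (forall i, 0 <= g i) -> 0 <= fsum n g.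
Proof.
  revert g; induction n; intros g H; simpl. lra.
  pose proof (IHn (fun i => g (Fin.FS i)) (fun i => H _)). pose proof (H Fin.F1). lra.
Qed.

Lemma fsum_term n (g : Fin.t n -> R) : (forall i, 0 <= g i) -> forall i, g i <= fsum n g.
Proof.
  revert g; induction n; intros g H i. inversion i.
  revert H; apply (Fin.caseS' i); simpl.
  - intros H. pose proof (fsum_nonneg n (fun i => g (Fin.FS i)) (fun i => H _)). lra.
  - intros p H. pose proof (IHn (fun i => g (Fin.FS i)) (fun i => H _) p). pose proof (H Fin.F1). lra.
Qed.

Lemma fsum_cv n (g : nat -> Fin.t n -> R) (l : Fin.t n -> R) :
  (forall i, Un_cv (fun k => g k i) (l i)) -> Un_cv (fun k => fsum n (g k)) (fsum n l).
Proof.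
  revert g l; induction n; intros g l H; simpl.
  - intros eps Heps. exists 0%nat. intros. unfold Rdist. rewrite Rminus_diag, Rabs_R0. lra.
  - apply CV_plus. apply H. apply (IHn (fun k i => g k (Fin.FS i)) (fun i => l (Fin.FS i))).
    intros i; apply H.
Qed.

Lemma fsum_sub n (g h : Fin.t n -> R) : fsum n (fun i => g i - h i) = fsum n g - fsum n h.
Proof.
  unfold Rminus. rewrite fsum_add. f_equal.
  replace (- fsum n h) with ((-1) * fsum n h) by ring. rewrite <- fsum_scal.
  apply fsum_ext; intros; ring.
Qed.

Definition ns {n} (x : vec n) := inner x x.

Lemma ns_nonneg {n} (x : vec n) : 0 <= ns x.
Proof. apply fsum_nonneg; intros; nra. Qed.

Lemma norm_nonneg {n} (x : vec n) : 0 <= norm x.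
Proof. apply sqrt_pos. Qed.

Lemma norm_sq {n} (x : vec n) : norm x * norm x = ns x.
Proof. apply sqrt_sqrt, ns_nonneg. Qed.

Lemma ns_zero_eq {n} (x y : vec n) : ns (vsub x y) = 0 -> x = y.
Proof.
  intros H. apply functional_extensionality; intros i.
  pose proof (fsum_zero_inv := fsum_term n (fun i => vsub x y i * vsub x y i) (fun i => ltac:(nra)) i).
  pose proof (fsum_nonneg n (fun i => vsub x y i * vsub x y i) (fun i => ltac:(nra))).
  unfold ns, inner in H. unfold vsub in *. nra.
Qed.

Lemma norm_zero_eq {n} (x y : vec n) : norm (vsub x y) = 0 -> x = y.
Proof.
  intros H. apply ns_zero_eq. rewrite <- norm_sq, H. ring.
Qed.

Lemma ns_self {n} (x : vec n) : ns (vsub x x) = 0.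
Proof. unfold ns, inner, vsub. rewrite <- (fsum_0 n). apply fsum_ext; intros; ring. Qed.

Lemma norm_self {n} (x : vec n) : norm (vsub x x) = 0.
Proof. unfold norm. fold (ns (vsub x x)). rewrite ns_self. apply sqrt_0. Qed.

Lemma norm_le_of_sq {n} (x : vec n) b : 0 <= b -> ns x <= b * b -> norm x <= b.
Proof. intros Hb H. rewrite <- norm_sq in H. pose proof (norm_nonneg x). nra. Qed.

Lemma coord_le {n} (x : vec n) i : Rabs (x i) <= norm x.
Proof.
  pose proof (fsum_term n (fun i => x i * x i) (fun i => ltac:(nra)) i).
  pose proof (norm_sq x). pose proof (norm_nonneg x). unfold ns, inner in *.
  apply Rabs_le. nra.
Qed.

Lemma ns_scal {n} a (x : vec n) : ns (vscale a x) = a * a * ns x.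
Proof. unfold ns, inner, vscale. rewrite <- fsum_scal. apply fsum_ext; intros; ring. Qed.

Lemma norm_scal {n} a (x : vec n) : norm (vscale a x) = Rabs a * norm x.
Proof.
  unfold norm. fold (ns (vscale a x)) (ns x). rewrite ns_scal.
  rewrite sqrt_mult_alt. rewrite <- sqrt_Rsqr_abs. reflexivity. nra.
Qed.

Lemma ns_sym {n} (x y : vec n) : ns (vsub x y) = ns (vsub y x).
Proof. unfold ns, inner, vsub. apply fsum_ext; intros; ring. Qed.

Lemma norm_sym {n} (x y : vec n) : norm (vsub x y) = norm (vsub y x).
Proof. unfold norm. fold (ns (vsub x y)) (ns (vsub y x)). rewrite ns_sym; auto. Qed.

Lemma ns_minus {n} t (x y : vec n) :
  ns (fun i => x i - t * y i) = ns x - 2 * t * inner x y + t * t * ns y.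
Proof.
  unfold ns, inner. rewrite <- !fsum_scal. rewrite <- fsum_sub, <- fsum_add. apply fsum_ext; intros; ring.
Qed.

Lemma ns_zero_vec {n} (y : vec n) : ns y = 0 -> forall i, y i = 0.
Proof.
  intros H i. pose proof (fsum_term n (fun i => y i * y i) (fun i => ltac:(nra)) i).
  unfold ns, inner in H. nra.
Qed.

Lemma inner_zero_r {n} (x y : vec n) : (forall i, y i = 0) -> inner x y = 0.
Proof. intros H. unfold inner. rewrite <- (fsum_0 n). apply fsum_ext; intros; rewrite H; ring. Qed.

Lemma cs_sq {n} (x y : vec n) : inner x y * inner x y <= ns x * ns y.
Proof.
  destruct (Req_dec (ns y) 0) as [H0|H0].
  - rewrite (inner_zero_r x y (ns_zero_vec y H0)). rewrite H0. lra.
  - pose proof (ns_nonneg y). set (t := inner x y / ns y).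
    pose proof (ns_nonneg (fun i => x i - t * y i)). rewrite ns_minus in H1.
    unfold t in H1. assert (0 < ns y) by lra.
    assert (0 <= ns x - inner x y * inner x y / ns y).
    { replace (ns x - inner x y * inner x y / ns y) with
        (ns x - 2 * (inner x y / ns y) * inner x y + inner x y / ns y * (inner x y / ns y) * ns y) by (field; lra). lra. }
    assert (0 <= (ns x - inner x y * inner x y / ns y) * ns y) by nra.
    replace ((ns x - inner x y * inner x y / ns y) * ns y) with (ns x * ns y - inner x y * inner x y) in H4 by (field; lra). lra.
Qed.

Lemma cs {n} (x y : vec n) : Rabs (inner x y) <= norm x * norm y.
Proof.
  pose proof (cs_sq x y). rewrite <- !norm_sq in H.
  pose proof (norm_nonneg x). pose proof (norm_nonneg y).
  assert (0 <= norm x * norm y) by nra. set (p := norm x * norm y) in *.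
  assert (inner x y * inner x y <= p * p) by (unfold p; nra). clearbody p.
  apply Rabs_le. split; nra.
Qed.

Lemma ns_add {n} (a b : vec n) : ns (fun i => a i + b i) = ns a + 2 * inner a b + ns b.
Proof.
  unfold ns, inner. rewrite <- fsum_scal, <- !fsum_add. apply fsum_ext; intros; ring.
Qed.

Lemma norm_tri {n} (x y z : vec n) : norm (vsub x z) <= norm (vsub x y) + norm (vsub y z).
Proof.
  apply norm_le_of_sq. pose proof (norm_nonneg (vsub x y)); pose proof (norm_nonneg (vsub y z)); lra.
  replace (ns (vsub x z)) with (ns (fun i => vsub x y i + vsub y z i)).
  2:{ unfold ns, inner, vsub. apply fsum_ext; intros; ring. }
  rewrite ns_add. pose proof (cs (vsub x y) (vsub y z)). pose proof (Rle_abs (inner (vsub x y) (vsub y z))).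
  rewrite <- !norm_sq. nra.
Qed.

Lemma norm_vzero_sub {n} (v : vec n) : norm (vsub vzero v) = norm v.
Proof. unfold norm, inner, vsub, vzero. f_equal. apply fsum_ext; intros; cbv beta; ring. Qed.

Lemma ns_vzero {n} : ns (@vzero n) = 0.
Proof. unfold ns, inner, vzero. rewrite (fsum_ext n _ (fun _ => 0)). apply fsum_0. intros; ring. Qed.

Lemma Rabs_le_inv a b : Rabs a <= b -> -b <= a <= b.
Proof. unfold Rabs; destruct (Rcase_abs a); intros; lra. Qed.

Lemma choice_nat {A : Type} (P : nat -> A -> Prop) :
  (forall k, exists a, P k a) -> exists g : nat -> A, forall k, P k (g k).
Proof.
  intros H. exists (fun k => proj1_sig (constructive_indefinite_description _ (H k))).
  intros k. exact (proj2_sig (constructive_indefinite_description _ (H k))).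
Qed.

Lemma small_inv eps : eps > 0 -> exists N, forall k, (k >= N)%nat -> / (INR k + 1) < eps.
Proof.
  intros He. destruct (INR_archimed eps 1 He) as [N HN]. exists N. intros k Hk.
  apply le_INR in Hk. pose proof (pos_INR k).
  apply (Rmult_lt_reg_r (INR k + 1)). lra. rewrite Rinv_l by lra. nra.
Qed.

Lemma inv_pos_k k : 0 < / (INR k + 1).
Proof. pose proof (pos_INR k). apply Rinv_0_lt_compat. lra. Qed.

Definition incr (phi : nat -> nat) := forall k, (phi k < phi (S k))%nat.

Lemma incr_ge phi : incr phi -> forall k, (k <= phi k)%nat.
Proof. intros H; induction k. lia. specialize (H k). lia. Qed.

Lemma incr_comp phi psi : incr phi -> incr psi -> incr (fun k => phi (psi k)).
Proof.
  intros Hp Hq k. assert (forall a b, (a < b)%nat -> (phi a < phi b)%nat).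
  { intros a b Hab. induction Hab. apply Hp. specialize (Hp m). lia. }
  apply H, Hq.
Qed.

Lemma cv_subseq phi u l : incr phi -> Un_cv u l -> Un_cv (fun k => u (phi k)) l.
Proof.
  intros Hp H eps He. destruct (H eps He) as [N HN]. exists N. intros k Hk.
  apply HN. pose proof (incr_ge phi Hp k). lia.
Qed.

Fixpoint mkphi (g : nat -> nat -> nat) (k : nat) : nat :=
  match k with O => g O O | S k' => g (S (mkphi g k')) (S k') end.

Lemma bw_R (x : nat -> R) B : (forall k, Rabs (x k) <= B) ->
  exists phi l, incr phi /\ Un_cv (fun k => x (phi k)) l.
Proof.
  intros HB.
  destruct (Bolzano_Weierstrass x (fun c => -B <= c <= B) (compact_P3 (-B) B)) as [l Hl].
  { intros k. specialize (HB k). apply Rabs_le_inv in HB. lra. }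
  assert (H : forall N k, exists p, (N <= p)%nat /\ Rabs (x p - l) < / (INR k + 1)).
  { intros N k. destruct (Hl (disc l (mkposreal _ (inv_pos_k k))) N) as [p [Hp1 Hp2]].
    exists (mkposreal _ (inv_pos_k k)). intros y Hy; exact Hy.
    exists p; split; auto. }
  destruct (choice_nat (fun N g => forall k, (N <= g k)%nat /\ Rabs (x (g k) - l) < / (INR k + 1)))
    as [g Hg].
  { intros N. apply (choice_nat (fun k p => (N <= p)%nat /\ Rabs (x p - l) < / (INR k + 1))).
    apply H. }
  exists (mkphi g), l. split.
  - intros k. simpl. destruct (Hg (S (mkphi g k)) (S k)). lia.
  - intros eps He. destruct (small_inv eps He) as [N HN]. exists N. intros k Hk.
    unfold Rdist. apply Rlt_trans with (/ (INR k + 1)); auto.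
    destruct k; simpl; apply Hg.
Qed.

Lemma bw_vec n : forall (x : nat -> vec n) (B : vec n), (forall k i, Rabs (x k i) <= B i) ->
  exists phi l, incr phi /\ forall i, Un_cv (fun k => x (phi k) i) (l i).
Proof.
  induction n; intros x B HB.
  - exists (fun k => k), (fun _ => 0). split. intros k; lia. intros i; inversion i.
  - destruct (IHn (fun k i => x k (Fin.FS i)) (fun i => B (Fin.FS i))) as [phi1 [l1 [Hp1 Hl1]]].
    { intros; apply HB. }
    destruct (bw_R (fun k => x (phi1 k) Fin.F1) (B Fin.F1)) as [phi2 [a [Hp2 Ha]]].
    { intros; apply HB. }
    exists (fun k => phi1 (phi2 k)), (fun i => Fin.caseS' i (fun _ => R) a l1).
    split. apply incr_comp; auto.
    intros i. apply (Fin.caseS' i); simpl. exact Ha.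
    intros p. apply (cv_subseq phi2 (fun k => x (phi1 k) (Fin.FS p))); auto.
Qed.

Lemma cv_ns n (x : nat -> vec n) l : (forall i, Un_cv (fun k => x k i) (l i)) ->
  Un_cv (fun k => ns (vsub (x k) l)) 0.
Proof.
  intros H. unfold ns, inner.
  rewrite <- (fsum_0 n).
  apply (fsum_cv n (fun k i => vsub (x k) l i * vsub (x k) l i) (fun _ => 0)).
  intros i. unfold vsub. replace 0 with ((l i - l i) * (l i - l i)) by ring.
  apply CV_mult; apply CV_minus; auto; intros eps He; exists 0%nat; intros;
    unfold Rdist; rewrite Rminus_diag, Rabs_R0; lra.
Qed.

Lemma cv_norm n (x : nat -> vec n) l : (forall i, Un_cv (fun k => x k i) (l i)) ->
  Un_cv (fun k => norm (vsub (x k) l)) 0.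
Proof.
  intros H. unfold norm. rewrite <- sqrt_0.
  apply (continuity_seq sqrt (fun k => ns (vsub (x k) l)) 0).
  apply continuity_pt_sqrt; lra. apply cv_ns; auto.
Qed.

Lemma cv_inner n (a b : nat -> vec n) la lb :
  (forall i, Un_cv (fun k => a k i) (la i)) -> (forall i, Un_cv (fun k => b k i) (lb i)) ->
  Un_cv (fun k => inner (a k) (b k)) (inner la lb).
Proof.
  intros Ha Hb. unfold inner.
  apply (fsum_cv n (fun k i => a k i * b k i)). intros i. apply CV_mult; auto.
Qed.

Lemma cv_coord_of_norm n (x : nat -> vec n) l : Un_cv (fun k => norm (vsub (x k) l)) 0 ->
  forall i, Un_cv (fun k => x k i) (l i).
Proof.
  intros H i eps He. destruct (H eps He) as [N HN]. exists N. intros k Hk.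
  specialize (HN k Hk). unfold Rdist in *. rewrite Rminus_0_r, Rabs_pos_eq in HN by apply norm_nonneg.
  eapply Rle_lt_trans; [|exact HN]. apply (coord_le (vsub (x k) l) i).
Qed.

Lemma dist_some n (x : vec n) (A : vec n -> Prop) : (exists a, A a) ->
  exists d, dist_set x A = Some d /\ (forall a, A a -> d <= norm (vsub x a)) /\
    (forall m, (forall a, A a -> m <= norm (vsub x a)) -> m <= d).
Proof.
  intros Hex. unfold dist_set.
  destruct (excluded_middle_informative _) as [H|H]; [|contradiction].
  destruct (completeness _ _ _) as [s [Hub Hlub]]. simpl. exists (-s). split; auto. split.
  - intros a Ha. assert (- norm (vsub x a) <= s) by (apply Hub; eauto). lra.
  - intros m Hm. assert (s <= -m). { apply Hlub. intros r [a [Ha ->]]. specialize (Hm a Ha). lra. } lra.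
Qed.

Lemma dist_none n (x : vec n) (A : vec n -> Prop) : ~ (exists a, A a) -> dist_set x A = None.
Proof.
  intros Hex. unfold dist_set.
  destruct (excluded_middle_informative _) as [H|H]; [contradiction|]. reflexivity.
Qed.

Lemma cv_const0 : Un_cv (fun _ => 0) 0.
Proof. intros eps He; exists 0%nat; intros; unfold Rdist; rewrite Rminus_diag, Rabs_R0; lra. Qed.

Lemma pnorm_self n (w : pt n) : pnorm (psub w w) = 0.
Proof.
  destruct w as [x r]; unfold pnorm, pinner, psub; simpl.
  change (inner (vsub x x) (vsub x x)) with (ns (vsub x x)). rewrite ns_self.
  replace (0 + (r - r) * (r - r)) with 0 by ring. apply sqrt_0.
Qed.

Lemma prox_to_subdiff n (f : vec n -> ereal) u a v C d :
  f u = Some a -> 0 < d -> 0 <= C ->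
  (forall y b, norm (vsub y u) < d -> f y = Some b -> a + inner v (vsub y u) - C * ns (vsub y u) <= b) ->
  subdiff f u v.
Proof.
  intros Hfu Hd HC H. unfold subdiff. rewrite Hfu.
  assert (Hepi : epi f (u, a)) by (unfold epi; simpl; rewrite Hfu; lra).
  split; auto.
  exists (fun _ => (u, a)), (fun _ => (v, -1)). split; [auto|]. split.
  { rewrite pnorm_self. apply cv_const0. } split.
  { rewrite pnorm_self. apply cv_const0. }
  intros k. split; auto. intros eps He.
  exists (Rmin d (eps / (C + 1))). split.
  { apply Rmin_pos; auto. apply Rdiv_lt_0_compat; lra. }
  intros [y r] Hy Hn. unfold epi in Hy; simpl in Hy.
  destruct (f y) as [b|] eqn:Hfy; [|contradiction].
  unfold pnorm, pinner, psub in *; simpl in *.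
  change (inner (vsub y u) (vsub y u)) with (ns (vsub y u)) in *.
  pose proof (ns_nonneg (vsub y u)) as Hns.
  assert (Hs : 0 <= (r - a) * (r - a)) by (pose proof (Rle_0_sqr (r - a)); unfold Rsqr in *; lra).
  set (P := sqrt (ns (vsub y u) + (r - a) * (r - a))) in *.
  assert (HP2 : P * P = ns (vsub y u) + (r - a) * (r - a)) by (unfold P; apply sqrt_sqrt; lra).
  assert (HP0 : 0 <= P) by (unfold P; apply sqrt_pos).
  assert (Hnorm : norm (vsub y u) <= P).
  { unfold P, norm. apply sqrt_le_1_alt. change (inner (vsub y u) (vsub y u)) with (ns (vsub y u)). lra. }
  clearbody P.
  pose proof (Rmin_l d (eps / (C + 1))). pose proof (Rmin_r d (eps / (C + 1))).
  specialize (H y b ltac:(lra) Hfy).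
  assert (HPe : P * (C + 1) <= eps).
  { assert (HPl : P <= eps / (C + 1)) by lra. apply (Rmult_le_compat_r (C+1)) in HPl; [|lra].
    unfold Rdiv in HPl. rewrite Rmult_assoc, Rinv_l in HPl by lra. lra. }
  assert (C * (P * P) <= eps * P) by nra.
  assert (C * ns (vsub y u) <= C * (P * P)) by (apply Rmult_le_compat_l; nra). lra.
Qed.

Lemma norm_diff_le n (a b q : vec n) : Rabs (norm (vsub a q) - norm (vsub b q)) <= norm (vsub a b).
Proof.
  pose proof (norm_tri a b q). pose proof (norm_tri b a q). rewrite (norm_sym b a) in H0.
  apply Rabs_le. lra.
Qed.

Lemma cv_norm_shift n (x : nat -> vec n) l q : Un_cv (fun k => norm (vsub (x k) l)) 0 ->
  Un_cv (fun k => norm (vsub (x k) q)) (norm (vsub l q)).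
Proof.
  intros H eps He. destruct (H eps He) as [N HN]. exists N. intros k Hk.
  specialize (HN k Hk). unfold Rdist in *. rewrite Rminus_0_r, Rabs_pos_eq in HN by apply norm_nonneg.
  eapply Rle_lt_trans; [apply norm_diff_le|exact HN].
Qed.

Lemma argmin n (f : vec n -> ereal) (G : R -> R) (c q p : vec n) (Rad B : R) :
  lsc f -> (forall r, continuity_pt G r) -> (forall r, 0 <= G r) ->
  norm (vsub p c) <= Rad -> f p <> None ->
  (forall y b, norm (vsub y c) <= Rad -> f y = Some b -> B <= b) ->
  exists u a, norm (vsub u c) <= Rad /\ f u = Some a /\
    forall y b, norm (vsub y c) <= Rad -> f y = Some b ->
      a + G (norm (vsub u q)) <= b + G (norm (vsub y q)).
Proof.
  intros Hlsc HG HG0 Hp Hfp HB.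
  set (T := fun t => exists y b, norm (vsub y c) <= Rad /\ f y = Some b /\ t = -(b + G (norm (vsub y q)))).
  assert (HT1 : bound T).
  { exists (-B). intros t [y [b [H1 [H2 ->]]]]. specialize (HB y b H1 H2). specialize (HG0 (norm (vsub y q))). lra. }
  assert (HT2 : exists t, T t).
  { destruct (f p) as [b|] eqn:E; [|contradiction]. exists (-(b + G (norm (vsub p q)))), p, b. auto. }
  destruct (completeness T HT1 HT2) as [s [Hub Hlub]].
  set (m := -s).
  assert (Hm : forall y b, norm (vsub y c) <= Rad -> f y = Some b -> m <= b + G (norm (vsub y q))).
  { intros y b H1 H2. assert (-(b + G (norm (vsub y q))) <= s) by (apply Hub; exists y, b; auto). unfold m; lra. }
  assert (Hk : forall k, exists yb : vec n * R, norm (vsub (fst yb) c) <= Rad /\ f (fst yb) = Some (snd yb) /\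
    snd yb + G (norm (vsub (fst yb) q)) < m + / (INR k + 1)).
  { intros k. apply NNPP; intros Hn.
    assert (s <= s - / (INR k + 1)).
    { apply Hlub. intros t [y [b [H1 [H2 ->]]]].
      assert (~ (b + G (norm (vsub y q)) < m + / (INR k + 1))).
      { intros Hc. apply Hn. exists (y, b). simpl. auto. }
      unfold m in H; lra. }
    pose proof (inv_pos_k k). lra. }
  destruct (choice_nat _ Hk) as [yb Hyb].
  set (y := fun k => fst (yb k)).
  destruct (bw_vec n y (fun i => Rabs (c i) + Rad)) as [phi [ys [Hphi Hys]]].
  { intros k i. destruct (Hyb k) as [H1 _]. pose proof (coord_le (vsub (y k) c) i).
    change (vsub (y k) c i) with (y k i - c i) in H. pose proof (Rabs_triang (y k i - c i) (c i)).
    replace (y k i - c i + c i) with (y k i) in H0 by ring. unfold y in *. lra. }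
  pose proof (cv_norm n (fun k => y (phi k)) ys Hys) as Hcv. simpl in Hcv.
  assert (Hball : norm (vsub ys c) <= Rad).
  { apply Rnot_lt_le; intros Hc.
    destruct (Hcv (norm (vsub ys c) - Rad) ltac:(lra)) as [N HN].
    specialize (HN N (le_n _)). unfold Rdist in HN. rewrite Rminus_0_r, Rabs_pos_eq in HN by apply norm_nonneg.
    pose proof (norm_tri ys (y (phi N)) c). rewrite (norm_sym ys (y (phi N))) in H.
    destruct (Hyb (phi N)) as [H1 _]. unfold y in *. lra. }
  set (gs := G (norm (vsub ys q))).
  assert (Hg : Un_cv (fun k => G (norm (vsub (y (phi k)) q))) gs).
  { apply continuity_seq. apply HG. apply cv_norm_shift. exact Hcv. }
  assert (Hmain : exists a, f ys = Some a /\ a + gs <= m).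
  { apply NNPP; intros Hn.
    assert (Heta : exists eta, 0 < eta /\ rlt_e (m - gs + eta / 2) (f ys)).
    { destruct (f ys) as [a|] eqn:E.
      - exists (a + gs - m). assert (~ (a + gs <= m)) by (intros Hc; apply Hn; eauto).
        split; simpl; lra.
      - exists 1. split; simpl; auto. lra. }
    destruct Heta as [eta [Heta Hr]].
    destruct (Hlsc ys _ Hr) as [dl [Hdl Hdl2]].
    destruct (Hcv dl Hdl) as [N1 HN1].
    destruct (Hg (eta/4) ltac:(lra)) as [N2 HN2].
    destruct (small_inv (eta/4) ltac:(lra)) as [N3 HN3].
    set (k := Nat.max N1 (Nat.max N2 N3)).
    specialize (HN1 k ltac:(unfold k; lia)). specialize (HN2 k ltac:(unfold k; lia)).
    pose proof (incr_ge phi Hphi k).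
    specialize (HN3 (phi k) ltac:(unfold k in *; lia)).
    unfold Rdist in HN1, HN2. rewrite Rminus_0_r, Rabs_pos_eq in HN1 by apply norm_nonneg.
    specialize (Hdl2 (y (phi k)) HN1).
    destruct (Hyb (phi k)) as [_ [H2 H3]]. unfold y in *. rewrite H2 in Hdl2. simpl in Hdl2.
    apply Rlt_le, Rabs_le_inv in HN2. lra. }
  destruct Hmain as [a [Ha Ham]].
  exists ys, a. split; auto. split; auto.
  intros y0 b H1 H2. specialize (Hm y0 b H1 H2). fold gs. lra.
Qed.

Lemma ns_three n (y x u : vec n) :
  ns (vsub y x) = ns (vsub u x) + 2 * inner (vsub u x) (vsub y u) + ns (vsub y u).
Proof. unfold ns, inner. rewrite <- fsum_scal, <- !fsum_add. apply fsum_ext; intros; unfold vsub; ring. Qed.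

Lemma inner_scal_l n a (w h : vec n) : inner (vscale a w) h = a * inner w h.
Proof. unfold inner, vscale. rewrite <- fsum_scal. apply fsum_ext; intros; ring. Qed.

Lemma inner_sub_swap n (x u h : vec n) : inner (vsub x u) h = - inner (vsub u x) h.
Proof.
  unfold inner, vsub. replace (- fsum n (fun i => (u i - x i) * h i)) with ((-1) * fsum n (fun i => (u i - x i) * h i)) by ring.
  rewrite <- fsum_scal. apply fsum_ext; intros; ring.
Qed.

Lemma norm_scal_pos n c (w : vec n) : 0 <= c -> norm (vscale c w) = c * norm w.
Proof. intros. rewrite norm_scal, Rabs_pos_eq; auto. Qed.

Lemma ns_norm n (x : vec n) : ns x = norm x * norm x.
Proof. symmetry; apply norm_sq. Qed.

Lemma sms_bound n (f : vec n -> ereal) xb :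
  strong_metric_subregular (subdiff f) xb vzero ->
  exists kap r, 0 < kap /\ 0 < r /\ forall u v, norm (vsub u xb) < r -> subdiff f u v ->
    norm (vsub u xb) <= kap * norm v.
Proof.
  intros [[Hsub0 [kap [d [Hk [Hd Hreg]]]]] [e [He Hiso]]].
  exists kap, (Rmin d (e/2)). split; auto. split. apply Rmin_pos; lra.
  intros u v Hu Hv. pose proof (Rmin_l d (e/2)); pose proof (Rmin_r d (e/2)).
  specialize (Hreg u ltac:(lra)).
  destruct (dist_some n u (fun a => subdiff f a vzero) (ex_intro _ xb Hsub0)) as [d1 [E1 [_ H1]]].
  destruct (dist_some n vzero (subdiff f u) (ex_intro _ v Hv)) as [d2 [E2 [H2 _]]].
  rewrite E1, E2 in Hreg. simpl in Hreg.
  assert (norm (vsub u xb) <= d1).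
  { apply H1. intros a Ha. destruct (Rlt_or_le (norm (vsub a xb)) e) as [Hl|Hl].
    - rewrite (Hiso a Ha Hl). lra.
    - pose proof (norm_tri a u xb). rewrite (norm_sym a u) in H3. lra. }
  specialize (H2 v Hv). rewrite norm_vzero_sub in H2.
  assert (kap * d2 <= kap * norm v) by (apply Rmult_le_compat_l; lra). lra.
Qed.

Lemma part2 n (f : vec n -> ereal) xb : lsc f -> dom f xb -> local_minimizer f xb ->
  strong_metric_subregular (subdiff f) xb vzero -> strong_local_minimizer f xb.
Proof.
  intros Hlsc Hdom Hlm Hsms.
  unfold dom in Hdom. destruct (f xb) as [fb|] eqn:Hfb; [|contradiction].
  destruct Hlm as [d0 [Hd0 Hlm]].
  destruct (sms_bound n f xb Hsms) as [kap [r [Hk [Hr Hbd]]]].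
  set (c := / kap). assert (Hc : 0 < c) by (apply Rinv_0_lt_compat; auto).
  set (R0 := Rmin d0 r / 2).
  assert (HR0 : 0 < R0) by (unfold R0; pose proof (Rmin_pos d0 r Hd0 Hr); lra).
  assert (HR0d : R0 <= d0 /\ R0 < r) by (unfold R0; pose proof (Rmin_l d0 r); pose proof (Rmin_r d0 r); lra).
  exists (c / 16), (R0 / 2). split. lra. split. lra.
  intros x Hx. rewrite Hfb. destruct (f x) as [b|] eqn:Hfx; auto.
  remember (norm (vsub x xb)) as rho eqn:Erho.
  apply Rnot_lt_ge. intros Hlt.
  assert (Hfbb : fb <= b). { specialize (Hlm x ltac:(lra)). rewrite Hfb, Hfx in Hlm. exact Hlm. }
  assert (Hrho : 0 < rho).
  { destruct (Rle_lt_or_eq_dec 0 rho ltac:(rewrite Erho; apply norm_nonneg)) as [H|H]; auto.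
    assert (c / 16 / 2 * rho ^ 2 = 0) by (rewrite <- H; ring). lra. }
  destruct (argmin n f (fun r => c / 2 * (r * r)) xb x x R0 fb Hlsc) as [u [a [Hu [Hfu Hmin]]]].
  { intros; reg. } { intros; pose proof (Rle_0_sqr r0); unfold Rsqr in *; nra. }
  { lra. } { congruence. }
  { intros y b' Hy Hfy. specialize (Hlm y ltac:(lra)). rewrite Hfb, Hfy in Hlm. exact Hlm. }
  assert (Hfba : fb <= a). { specialize (Hlm u ltac:(lra)). rewrite Hfb, Hfu in Hlm. exact Hlm. }
  pose proof (Hmin x b ltac:(lra) Hfx) as Hx1. rewrite norm_self in Hx1.
  remember (norm (vsub u x)) as nux eqn:Enux.
  assert (Hnux : nux < rho / 4).
  { assert (0 <= nux) by (rewrite Enux; apply norm_nonneg).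
    assert (c * (nux * nux) < c * (rho * rho / 16)) by nra.
    apply Rmult_lt_reg_l in H0; auto. nra. }
  pose proof (norm_tri u x xb) as Ht.
  set (v := vscale c (vsub x u)).
  assert (Hv : subdiff f u v).
  { apply (prox_to_subdiff n f u a v (c/2) (R0 - norm (vsub u xb))); auto; try lra.
    intros y b' Hy Hfy. pose proof (norm_tri y u xb).
    specialize (Hmin y b' ltac:(lra) Hfy).
    unfold v. rewrite inner_scal_l, inner_sub_swap.
    pose proof (ns_three n y x u). rewrite !ns_norm in H0.
    rewrite ns_norm. rewrite <- Enux in H0. nra. }
  specialize (Hbd u v ltac:(lra) Hv). unfold v in Hbd.
  rewrite norm_scal_pos, (norm_sym x u) in Hbd by lra. rewrite <- Enux in Hbd.
  replace (kap * (c * nux)) with nux in Hbd by (unfold c; field; lra).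
  pose proof (norm_tri x u xb). rewrite (norm_sym x u) in H. lra.
Qed.

Definition pos (s : R) := (s + Rabs s) / 2.

Lemma pos_nonneg s : 0 <= pos s.
Proof. unfold pos. unfold Rabs; destruct (Rcase_abs s); lra. Qed.
Lemma pos_ge s : s <= pos s.
Proof. unfold pos. unfold Rabs; destruct (Rcase_abs s); lra. Qed.
Lemma pos_neg s : s <= 0 -> pos s = 0.
Proof. unfold pos. unfold Rabs; destruct (Rcase_abs s); intros; lra. Qed.
Lemma pos_pos s : 0 <= s -> pos s = s.
Proof. unfold pos. unfold Rabs; destruct (Rcase_abs s); intros; lra. Qed.
Lemma pos_le s x : s <= x -> 0 <= x -> pos s <= x.
Proof. unfold pos. unfold Rabs; destruct (Rcase_abs s); intros; lra. Qed.

Lemma pos_sq_le s D : pos (s + D) * pos (s + D) <= pos s * pos s + 2 * pos s * D + D * D.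
Proof.
  destruct (Rle_or_lt (s + D) 0) as [H1|H1].
  - rewrite (pos_neg (s + D)) by lra. pose proof (pos_nonneg s).
    replace (pos s * pos s + 2 * pos s * D + D * D) with ((pos s + D) * (pos s + D)) by ring.
    pose proof (Rle_0_sqr (pos s + D)). unfold Rsqr in *. lra.
  - rewrite (pos_pos (s + D)) by lra.
    destruct (Rle_or_lt 0 s) as [H2|H2].
    + rewrite (pos_pos s) by lra. lra.
    + rewrite (pos_neg s) by lra. nra.
Qed.

Lemma inner_vzero_l n (h : vec n) : inner vzero h = 0.
Proof. unfold inner, vzero. rewrite (fsum_ext n _ (fun _ => 0)). apply fsum_0. intros; ring. Qed.

Lemma norm_vzero n : norm (@vzero n) = 0.
Proof. unfold norm. fold (ns (@vzero n)). rewrite ns_vzero. apply sqrt_0. Qed.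

Lemma inner_comm n (x y : vec n) : inner x y = inner y x.
Proof. unfold inner. apply fsum_ext; intros; ring. Qed.

Lemma cv_const c : Un_cv (fun _ => c) c.
Proof. intros eps He; exists 0%nat; intros; unfold Rdist; rewrite Rminus_diag, Rabs_R0; lra. Qed.

Section Key.
Variable n : nat.
Variable f : vec n -> ereal.
Variable xb : vec n.
Hypothesis PD : forall w z, graph_deriv_dom (subdiff f) xb vzero w -> w <> vzero ->
        graph_deriv (subdiff f) xb vzero w z -> inner z w > 0.

Lemma key (u v : nat -> vec n) (eps : nat -> R) L :
  (forall k, subdiff f (u k) (v k)) -> (forall k, u k <> xb) ->
  Un_cv (fun k => norm (vsub (u k) xb)) 0 ->
  (forall k, norm (v k) <= L * norm (vsub (u k) xb)) ->
  (forall k, inner (v k) (vsub (u k) xb) <= eps k * ns (vsub (u k) xb)) ->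
  Un_cv eps 0 -> False.
Proof.
  intros Hsub Hne Hcv HL Hin Heps.
  set (t := fun k => norm (vsub (u k) xb)).
  assert (Ht : forall k, 0 < t k).
  { intros k. unfold t. destruct (Rle_lt_or_eq_dec 0 _ (norm_nonneg (vsub (u k) xb))) as [H|H]; auto.
    exfalso. apply (Hne k). apply norm_zero_eq. auto. }
  set (w := fun k => vscale (/ t k) (vsub (u k) xb)).
  set (z := fun k => vscale (/ t k) (v k)).
  assert (Hw1 : forall k, norm (w k) = 1).
  { intros k. unfold w. rewrite norm_scal_pos by (apply Rlt_le, Rinv_0_lt_compat, Ht).
    fold (t k). specialize (Ht k). field. lra. }
  assert (Hz1 : forall k, norm (z k) <= L).
  { intros k. unfold z. rewrite norm_scal_pos by (apply Rlt_le, Rinv_0_lt_compat, Ht).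
    specialize (HL k). fold (t k) in HL. specialize (Ht k).
    apply (Rmult_le_compat_l (/ t k)) in HL; [|apply Rlt_le, Rinv_0_lt_compat; auto].
    replace (/ t k * (L * t k)) with L in HL by (field; lra). lra. }
  destruct (bw_vec n w (fun _ => 1)) as [phi1 [wl [Hp1 Hwl0]]].
  { intros k i. rewrite <- (Hw1 k). apply coord_le. }
  destruct (bw_vec n (fun k => z (phi1 k)) (fun _ => L)) as [phi2 [zl [Hp2 Hzl]]].
  { intros k i. eapply Rle_trans; [apply coord_le|apply Hz1]. }
  set (phi := fun k => phi1 (phi2 k)).
  assert (Hphi : incr phi) by (unfold phi; apply incr_comp; auto).
  assert (Hw : forall i, Un_cv (fun k => w (phi k) i) (wl i)).
  { intros i. apply (cv_subseq phi2 (fun k => w (phi1 k) i)); auto. }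
  assert (Hgd : graph_deriv (subdiff f) xb vzero wl zl).
  { exists (fun k => t (phi k)), (fun k => w (phi k)), (fun k => z (phi k)).
    split; [intros; apply Ht|]. split.
    { apply (cv_subseq phi t 0 Hphi Hcv). } split.
    { apply cv_norm; auto. } split.
    { apply cv_norm; auto. }
    intros k. specialize (Ht (phi k)).
    replace (vadd xb (vscale (t (phi k)) (w (phi k)))) with (u (phi k)).
    replace (vadd vzero (vscale (t (phi k)) (z (phi k)))) with (v (phi k)). apply Hsub.
    - apply functional_extensionality; intros i. unfold z, w, vadd, vzero, vscale. cbv beta. field. lra.
    - apply functional_extensionality; intros i. unfold z, w, vadd, vscale, vsub. cbv beta. field. lra. }
  assert (Hwl : wl <> vzero).
  { intros Heq. assert (Hc : Un_cv (fun k => inner (w (phi k)) (w (phi k))) (inner wl wl)) by (apply cv_inner; auto).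
    assert (Hc1 : Un_cv (fun k => inner (w (phi k)) (w (phi k))) 1).
    { replace (fun k => inner (w (phi k)) (w (phi k))) with (fun _ : nat => 1). apply cv_const.
      apply functional_extensionality; intros k. fold (ns (w (phi k))). rewrite <- norm_sq, Hw1. ring. }
    pose proof (UL_sequence _ _ _ Hc Hc1). rewrite Heq in H. fold (@ns n vzero) in H. rewrite ns_vzero in H. lra. }
  assert (Hle : inner zl wl <= 0).
  { apply (Rle_cv_lim (Un := fun k => inner (z (phi k)) (w (phi k))) (Vn := fun k => eps (phi k))).
    - intros k. unfold z, w. rewrite inner_scal_l, inner_comm, inner_scal_l, inner_comm.
      specialize (Hin (phi k)). specialize (Ht (phi k)). unfold t in *.
      rewrite ns_norm in Hin. set (T := norm (vsub (u (phi k)) xb)) in *.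
      apply (Rmult_le_compat_l (/ T * / T)) in Hin; [|apply Rlt_le, Rmult_lt_0_compat; apply Rinv_0_lt_compat; lra].
      replace (/ T * / T * (eps (phi k) * (T * T))) with (eps (phi k)) in Hin by (field; lra). lra.
    - apply cv_inner; auto.
    - apply cv_subseq; auto. }
  specialize (PD wl zl (ex_intro _ zl Hgd) Hwl Hgd). lra.
Qed.
End Key.

Lemma local_step n (f : vec n -> ereal) xb fb M d :
  lsc f -> f xb = Some fb -> 0 <= M -> 0 < d ->
  (forall y b, norm (vsub y xb) < d -> f y = Some b -> fb - M * ns (vsub y xb) <= b) ->
  forall R, 0 < R -> (2 * (M + 1) + 2) * R < d ->
  forall p b, norm (vsub p xb) <= R -> f p = Some b -> b < fb ->
  exists u l, u <> xb /\ norm (vsub u xb) <= (2 * (M + 1) + 1) * R /\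
    0 <= l <= (2 * (M + 1) + 2) * (2 * (M + 1) + 2) /\
    subdiff f u (vscale (- l) (vsub u xb)).
Proof.
  intros Hlsc Hfb HM Hd LB R HR HKR p b Hp Hfp Hb.
  set (A := M + 1). assert (EA : A = M + 1) by reflexivity.
  clearbody A. subst A.
  assert (HA : 1 <= (M + 1)) by lra.
  assert (HA2 : M <= (M + 1) * (M + 1)) by nra.
  set (iR := / (4 * (R * R))).
  assert (HiR : 0 < iR) by (unfold iR; apply Rinv_0_lt_compat; nra).
  assert (HiR1 : iR * (4 * (R * R)) = 1) by (unfold iR; field; lra).
  clearbody iR.
  set (G := fun r => iR * (pos (r * r - R * R) * pos (r * r - R * R))).
  assert (HG0 : forall r, 0 <= G r).
  { intros r. unfold G. pose proof (pos_nonneg (r * r - R * R)). 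
    apply Rmult_le_pos; [lra|]. apply Rmult_le_pos; lra. }
  assert (HGc : forall r, continuity_pt G r) by (intros r; unfold G, pos; reg).
  assert (HGR : forall r, 0 <= r <= R -> G r = 0).
  { intros r Hr. unfold G. rewrite pos_neg by nra. ring. }
  destruct (argmin n f G xb xb p ((2 * (M + 1) + 2) * R) (fb - M * (((2 * (M + 1) + 2) * R) * ((2 * (M + 1) + 2) * R))) Hlsc HGc HG0)
    as [u [a [Hu [Hfu Hmin]]]].
  { nra. } { congruence. }
  { intros y b' Hy Hfy. specialize (LB y b' ltac:(lra) Hfy).
    rewrite ns_norm in LB. pose proof (norm_nonneg (vsub y xb)).
    assert (norm (vsub y xb) * norm (vsub y xb) <= ((2 * (M + 1) + 2) * R) * ((2 * (M + 1) + 2) * R)) by nra. nra. }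
  remember (norm (vsub u xb)) as r eqn:Er.
  assert (Hr0 : 0 <= r) by (rewrite Er; apply norm_nonneg).
  assert (Hua : fb - M * (r * r) <= a).
  { specialize (LB u a ltac:(lra) Hfu). rewrite ns_norm, <- Er in LB. lra. }
  assert (HQ : G r <= b - a).
  { specialize (Hmin p b ltac:(nra) Hfp).
    rewrite (HGR (norm (vsub p xb))) in Hmin. lra. split; auto. apply norm_nonneg. }
  assert (HQM : G r < M * (r * r)) by lra.
  assert (Hune : u <> xb).
  { intros ->. rewrite norm_self in Er. subst r. rewrite HGR in HQM by lra. lra. }
  assert (Hrb : r < (2 * (M + 1) + 1) * R).
  { apply Rnot_le_lt; intros Hc.
    assert (HrR : R <= r) by nra.
    assert (Hs : 2 * (M + 1) * R * r <= r * r - R * R) by nra.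
    unfold G in HQM. rewrite pos_pos in HQM by nra.
    assert (4 * ((M + 1) * (M + 1)) * (R * R) * (r * r) <= (r * r - R * R) * (r * r - R * R)).
    { assert (0 <= 2 * (M + 1) * R * r) by nra. nra. }
    assert (iR * (4 * ((M + 1) * (M + 1)) * (R * R) * (r * r)) <= iR * ((r * r - R * R) * (r * r - R * R)))
      by (apply Rmult_le_compat_l; lra).
    replace (iR * (4 * ((M + 1) * (M + 1)) * (R * R) * (r * r))) with ((M + 1) * (M + 1) * (r * r) * (iR * (4 * (R * R)))) in H0 by ring.
    rewrite HiR1 in H0. nra. }
  set (s := r * r - R * R). assert (Es : s = r * r - R * R) by reflexivity.
  set (lam := 4 * iR * pos s). assert (Elam : lam = 4 * iR * pos s) by reflexivity.
  set (C := 2 * iR * pos s + iR * ((2 * r + 1) * (2 * r + 1))).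
  assert (EC : C = 2 * iR * pos s + iR * ((2 * r + 1) * (2 * r + 1))) by reflexivity.
  clearbody C lam s.
  exists u, lam. split; auto. split. lra. split.
  { pose proof (pos_nonneg s). split. rewrite Elam; nra.
    assert (pos s <= r * r) by (apply pos_le; [rewrite Es; nra | nra]).
    assert (lam <= 4 * iR * (r * r)) by (rewrite Elam; nra).
    assert (r * r <= (2 * (M + 1) + 1) * R * ((2 * (M + 1) + 1) * R)) by nra.
    assert (Hq : 4 * iR * (r * r) <= 4 * iR * ((2 * (M + 1) + 1) * R * ((2 * (M + 1) + 1) * R))) by nra.
    replace (4 * iR * ((2 * (M + 1) + 1) * R * ((2 * (M + 1) + 1) * R))) with ((2 * (M + 1) + 1) * (2 * (M + 1) + 1) * (iR * (4 * (R * R)))) in Hq by ring.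
    rewrite HiR1 in Hq. nra. }
  apply (prox_to_subdiff n f u a _ C (Rmin 1 ((2 * (M + 1) + 2) * R - r))); auto.
  { apply Rmin_pos. lra. nra. }
  { rewrite EC. pose proof (pos_nonneg s). nra. }
  intros y b' Hy Hfy.
  pose proof (Rmin_l 1 ((2 * (M + 1) + 2) * R - r)). pose proof (Rmin_r 1 ((2 * (M + 1) + 2) * R - r)).
  pose proof (norm_tri y u xb).
  specialize (Hmin y b' ltac:(lra) Hfy).
  rewrite inner_scal_l. rewrite ns_norm.
  pose proof (ns_three n y xb u) as H3. rewrite !ns_norm, <- Er in H3.
  set (ry := norm (vsub y xb)) in *.
  set (nh := norm (vsub y u)) in *.
  set (ip := inner (vsub u xb) (vsub y u)) in *.
  assert (Hnh : 0 <= nh) by (unfold nh; apply norm_nonneg).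
  assert (Hip : Rabs ip <= r * nh) by (unfold ip, nh; rewrite Er; apply cs).
  apply Rabs_le_inv in Hip.
  set (D := 2 * ip + nh * nh). assert (ED : D = 2 * ip + nh * nh) by reflexivity. clearbody D.
  assert (HD : ry * ry - R * R = s + D) by lra.
  assert (HGy : G ry <= G r + lam * ip + lam / 2 * (nh * nh) + iR * (D * D)).
  { unfold G. rewrite HD. rewrite <- Es. pose proof (pos_sq_le s D) as Hps.
    apply (Rmult_le_compat_l iR) in Hps; [|lra]. rewrite Elam, ED in *. nra. }
  assert (HD2 : D * D <= (2 * r + 1) * (2 * r + 1) * (nh * nh)).
  { assert (nh * nh <= nh) by nra.
    assert (- ((2 * r + 1) * nh) <= D <= (2 * r + 1) * nh) by nra.
    nra. }
  assert (iR * (D * D) <= iR * ((2 * r + 1) * (2 * r + 1) * (nh * nh))) by (apply Rmult_le_compat_l; lra).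
  rewrite EC. nra.
Qed.

Lemma part3 n (f : vec n -> ereal) xb : lsc f -> dom f xb ->
  prox_subdiff f xb vzero ->
  (forall w z, graph_deriv_dom (subdiff f) xb vzero w -> w <> vzero ->
        graph_deriv (subdiff f) xb vzero w z -> inner z w > 0) ->
  local_minimizer f xb /\ strong_metric_subregular (subdiff f) xb vzero.
Proof.
  intros Hlsc Hdom Hprox PD.
  unfold dom in Hdom. unfold prox_subdiff in Hprox.
  destruct (f xb) as [fb|] eqn:Hfb; [|contradiction].
  destruct Hprox as [M0 [d [Hd Hprox]]].
  set (M := Rabs M0). assert (HM : 0 <= M) by apply Rabs_pos.
  assert (HM0 : - M <= M0) by (unfold M; unfold Rabs; destruct (Rcase_abs M0); lra).
  clearbody M.
  assert (LB : forall y b, norm (vsub y xb) < d -> f y = Some b -> fb - M * ns (vsub y xb) <= b).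
  { intros y b Hy Hfy. pose proof (ns_nonneg (vsub y xb)).
    destruct (Rle_lt_or_eq_dec 0 _ (norm_nonneg (vsub y xb))) as [Hp|Hp].
    - specialize (Hprox y (conj Hp Hy)). rewrite Hfy in Hprox.
      rewrite inner_vzero_l in Hprox. rewrite ns_norm.
      set (t := norm (vsub y xb)) in *.
      assert (Ht2 : 0 < t ^ 2) by (apply pow_lt; auto).
      apply (Rmult_le_compat_r (t ^ 2)) in Hprox; [|lra].
      replace ((b - fb - 0) / t ^ 2 * t ^ 2) with (b - fb) in Hprox by (field; lra).
      assert (M0 * t ^ 2 >= - M * t ^ 2) by nra. simpl in *. nra.
    - symmetry in Hp. apply norm_zero_eq in Hp. subst y. rewrite Hfb in Hfy. inversion Hfy.
      nra. }
  assert (H0 : subdiff f xb vzero).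
  { apply (prox_to_subdiff n f xb fb vzero M d); auto.
    intros y b Hy Hfy. rewrite inner_vzero_l. specialize (LB y b Hy Hfy). lra. }
  assert (SR : exists kap del, 0 < kap /\ 0 < del /\ forall u v, norm (vsub u xb) < del ->
     subdiff f u v -> norm (vsub u xb) <= kap * norm v).
  { apply NNPP; intros Hn.
    assert (Hk : forall k, exists uv : vec n * vec n, norm (vsub (fst uv) xb) < / (INR k + 1) /\
       subdiff f (fst uv) (snd uv) /\ (INR k + 1) * norm (snd uv) < norm (vsub (fst uv) xb)).
    { intros k. apply NNPP; intros Hk. apply Hn. exists (INR k + 1), (/ (INR k + 1)).
      pose proof (pos_INR k). split. lra. split. apply inv_pos_k.
      intros u v Hu Hv. apply Rnot_lt_le; intros Hc. apply Hk. exists (u, v). simpl. auto. }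
    destruct (choice_nat _ Hk) as [uv Huv].
    apply (key n f xb PD (fun k => fst (uv k)) (fun k => snd (uv k)) (fun k => / (INR k + 1)) 1).
    - intros k; apply Huv.
    - intros k Heq. destruct (Huv k) as [_ [_ H3]]. rewrite Heq, norm_self in H3.
      pose proof (pos_INR k). pose proof (norm_nonneg (snd (uv k))). nra.
    - intros eps He. destruct (small_inv eps He) as [N HN]. exists N. intros k Hk0.
      unfold Rdist. rewrite Rminus_0_r, Rabs_pos_eq by apply norm_nonneg.
      destruct (Huv k) as [H1 _]. specialize (HN k Hk0). lra.
    - intros k. destruct (Huv k) as [_ [_ H3]]. pose proof (pos_INR k).
      pose proof (norm_nonneg (snd (uv k))). nra.
    - intros k. destruct (Huv k) as [_ [_ H3]]. pose proof (pos_INR k).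
      pose proof (cs (snd (uv k)) (vsub (fst (uv k)) xb)). apply Rle_trans with (Rabs (inner (snd (uv k)) (vsub (fst (uv k)) xb))).
      apply Rle_abs. rewrite ns_norm.
      set (T := norm (vsub (fst (uv k)) xb)) in *. set (V := norm (snd (uv k))) in *.
      assert (0 <= V) by (unfold V; apply norm_nonneg).
      assert (0 <= T) by (unfold T; apply norm_nonneg).
      assert (V <= / (INR k + 1) * T).
      { apply (Rmult_le_reg_l (INR k + 1)). lra. rewrite <- Rmult_assoc, Rinv_r by lra. lra. }
      assert (V * T <= / (INR k + 1) * T * T) by nra. lra.
    - intros eps He. destruct (small_inv eps He) as [N HN]. exists N. intros k Hk0.
      unfold Rdist. rewrite Rminus_0_r. rewrite Rabs_pos_eq by (apply Rlt_le, inv_pos_k). auto. }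
  destruct SR as [kap [del [Hkap [Hdel SR]]]].
  split.
  -
    apply NNPP; intros Hn.
    set (K := 2 * (M + 1) + 2). assert (EK : K = 2 * (M + 1) + 2) by reflexivity. clearbody K.
    set (R0 := d / (2 * K)).
    assert (HR0 : 0 < R0) by (unfold R0; apply Rdiv_lt_0_compat; lra).
    assert (HKR0 : K * R0 < d) by (unfold R0; field_simplify; lra).
    clearbody R0.
    assert (Hk : forall k, exists ul : vec n * R, fst ul <> xb /\
       norm (vsub (fst ul) xb) <= (2 * (M + 1) + 1) * (R0 / (INR k + 1)) /\
       0 <= snd ul <= K * K /\ subdiff f (fst ul) (vscale (- snd ul) (vsub (fst ul) xb))).
    { intros k. pose proof (inv_pos_k k).
      assert (HRk : 0 < R0 / (INR k + 1)) by (unfold Rdiv; nra).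
      assert (HRk2 : R0 / (INR k + 1) <= R0).
      { unfold Rdiv. pose proof (pos_INR k). assert (/ (INR k + 1) <= 1).
        { rewrite <- Rinv_1. apply Rinv_le_contravar; lra. } nra. }
      assert (Hex : exists x b, norm (vsub x xb) <= R0 / (INR k + 1) /\ f x = Some b /\ b < fb).
      { apply NNPP; intros Hc. apply Hn. exists (R0 / (INR k + 1)). split; auto.
        intros x Hx. rewrite Hfb. destruct (f x) as [b|] eqn:Hfx; simpl; auto.
        apply Rnot_lt_le; intros Hb. apply Hc; eauto. }
      destruct Hex as [x [b [Hx [Hfx Hb]]]].
      destruct (local_step n f xb fb M d Hlsc Hfb HM Hd LB (R0 / (INR k + 1)) HRk
        ltac:(rewrite <- EK; nra) x b Hx Hfx Hb) as [u [l [H1 [H2 [H3 H4]]]]].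
      exists (u, l). simpl. rewrite EK. auto. }
    destruct (choice_nat _ Hk) as [ul Hul].
    apply (key n f xb PD (fun k => fst (ul k)) (fun k => vscale (- snd (ul k)) (vsub (fst (ul k)) xb)) (fun _ => 0) (K * K)).
    + intros k; apply Hul.
    + intros k; apply Hul.
    + intros eps He. destruct (small_inv (eps / ((2 * (M + 1) + 1) * R0 + 1))) as [N HN].
      { apply Rdiv_lt_0_compat; nra. }
      exists N. intros k Hk0. specialize (HN k Hk0).
      unfold Rdist. rewrite Rminus_0_r, Rabs_pos_eq by apply norm_nonneg.
      destruct (Hul k) as [_ [H2 _]]. pose proof (inv_pos_k k).
      assert (HP : 0 < (2 * (M + 1) + 1) * R0 + 1) by nra.
      apply Rle_lt_trans with ((2 * (M + 1) + 1) * R0 * / (INR k + 1)).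
      { unfold Rdiv in H2. lra. }
      apply (Rmult_lt_compat_l ((2 * (M + 1) + 1) * R0 + 1)) in HN; [|lra].
      replace (((2 * (M + 1) + 1) * R0 + 1) * (eps / ((2 * (M + 1) + 1) * R0 + 1))) with eps in HN by (field; lra).
      nra.
    + intros k. destruct (Hul k) as [_ [_ [H3 _]]]. rewrite norm_scal, Rabs_Ropp, Rabs_pos_eq by lra.
      apply Rmult_le_compat_r. apply norm_nonneg. lra.
    + intros k. destruct (Hul k) as [_ [_ [H3 _]]]. rewrite inner_scal_l.
      fold (ns (vsub (fst (ul k)) xb)). pose proof (ns_nonneg (vsub (fst (ul k)) xb)). nra.
    + apply cv_const0.
  - split.
    + split; auto. exists kap, del. split; auto. split; auto.
      intros x Hx.
      destruct (classic (exists v, subdiff f x v)) as [Hex|Hex].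
      * destruct (dist_some n x (fun u => subdiff f u vzero) (ex_intro _ xb H0)) as [d1 [E1 [H1 _]]].
        destruct (dist_some n vzero (subdiff f x) Hex) as [d2 [E2 [_ H2]]].
        rewrite E1, E2. simpl. specialize (H1 xb H0).
        assert (norm (vsub x xb) / kap <= d2).
        { apply H2. intros v Hv. rewrite norm_vzero_sub. specialize (SR x v Hx Hv).
          apply (Rmult_le_reg_l kap); auto. unfold Rdiv. rewrite <- Rmult_assoc.
          rewrite (Rmult_comm kap), Rmult_assoc, Rinv_r by lra. lra. }
        apply (Rmult_le_compat_l kap) in H; [|lra].
        replace (kap * (norm (vsub x xb) / kap)) with (norm (vsub x xb)) in H by (field; lra). lra.
      * rewrite (dist_none n vzero (subdiff f x) Hex). simpl.
        destruct (dist_set x (fun u => subdiff f u vzero)); simpl; auto.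
    + exists del. split; auto. intros x Hx Hlt.
      specialize (SR x vzero Hlt Hx). rewrite norm_vzero in SR.
      apply norm_zero_eq. pose proof (norm_nonneg (vsub x xb)). lra.
Qed.

Theorem theorem3p3 (n : nat) (f : vec n -> ereal) (xb : vec n)
  (Hproper : proper f) (Hlsc : lsc f) (Hdom : dom f xb) :
  ( (prox_subdiff f xb vzero /\
      forall w z, graph_deriv_dom (subdiff f) xb vzero w -> w <> vzero ->
        graph_deriv (subdiff f) xb vzero w z -> inner z w > 0)
    -> (local_minimizer f xb /\ strong_metric_subregular (subdiff f) xb vzero) )
  /\
  ( (local_minimizer f xb /\ strong_metric_subregular (subdiff f) xb vzero)
    -> strong_local_minimizer f xb ).
Proof.
  split.
  - intros [H1 H2]. apply part3; auto.
  - intros [H1 H2]. apply part2; auto.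
Qed.
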